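(* Let $K_1\subseteq K_2$ be fields, $n$ a positive integer, and $R=K_1+X^nK_2[[X]]$, i.e. the ring of formal power series $\sum_{i\ge0} a_iX^i$ with $a_0\in K_1$, $a_1=\dots=a_{n-1}=0$ and $a_i\in K_2$ for $i\ge n$. Then: (a) $R$ has absolutely irreducible elements if and only if $K_1=K_2$ and $n=1$; (b) $R$ has prime elements if and only if $K_1=K_2$ and $n=1$.
   Context: For an integral domain $R$, factorization notions refer to the monoid $(R\setminus\{0\},\cdot)$. An element is irreducible if it is a non-unit that is not a product of two non-units. Two factorizations into irreducibles $a_1\cdots a_n=b_1\cdots b_m$ of the same element are essentially the same if $n=m$ and, after re-indexing, $a_j$ and $b_j$ are associated for all $j$. An irreducible $r$ is absolutely irreducible if for every $n\in\mathbb N$, every factorization of $r^n$ into irreducibles is essentially the same as $r^n=r\cdots r$. *)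

(* Defs.v *)
From mathcomp Require Import all_boot all_algebra.
Set Implicit Arguments. Unset Strict Implicit. Unset Printing Implicit Defensive.
Import GRing.Theory.
Local Open Scope ring_scope.

Section PS.
Variable K : fieldType.

Definition pser := nat -> K.

Definition pone : pser := fun k => if k == 0%N then 1 else 0.
Definition pzero : pser := fun _ => 0.
Definition pmul (a b : pser) : pser :=
  fun k => \sum_(i < k.+1) a i * b (k - i)%N.

Definition pprod (s : seq pser) : pser := foldr pmul pone s.

Definition is_subfield (K1 : {pred K}) : Prop :=
  [/\ 1 \in K1,
      (forall x y, x \in K1 -> y \in K1 -> x - y \in K1),
      (forall x y, x \in K1 -> y \in K1 -> x * y \in K1) &
      (forall x, x \in K1 -> x^-1 \in K1)].

Definition inR (K1 : {pred K}) (n : nat) (a : pser) : Prop :=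
  a 0%N \in K1 /\ (forall i, (0 < i < n)%N -> a i = 0).

Variables (K1 : {pred K}) (n : nat).

Definition R_unit (u : pser) : Prop :=
  inR K1 n u /\ exists v, inR K1 n v /\ pmul u v = pone.

Definition R_irreducible (r : pser) : Prop :=
  [/\ inR K1 n r, r <> pzero, ~ R_unit r &
      forall b c, inR K1 n b -> inR K1 n c -> r = pmul b c ->
        R_unit b \/ R_unit c].

Definition R_assoc (a b : pser) : Prop :=
  exists u, R_unit u /\ a = pmul u b.

(* two lists are essentially the same: same length and, after re-indexing,
   pairwise associated *)
Inductive ess_same : seq pser -> seq pser -> Prop :=
| ess_nil : ess_same [::] [::]
| ess_cons a s t1 b t2 :
    R_assoc a b -> ess_same s (t1 ++ t2) -> ess_same (a :: s) (t1 ++ b :: t2).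

Fixpoint all_Prop (P : pser -> Prop) (s : seq pser) : Prop :=
  if s is a :: s' then P a /\ all_Prop P s' else True.

Definition R_factorization (s : seq pser) (x : pser) : Prop :=
  all_Prop R_irreducible s /\ pprod s = x.

Definition R_abs_irreducible (r : pser) : Prop :=
  R_irreducible r /\
  forall m : nat, forall s, R_factorization s (pprod (nseq m r)) ->
    ess_same s (nseq m r).

Definition R_divides (a b : pser) : Prop :=
  exists c, inR K1 n c /\ b = pmul a c.

Definition R_prime (p : pser) : Prop :=
  [/\ inR K1 n p, p <> pzero, ~ R_unit p &
      forall a b, inR K1 n a -> inR K1 n b -> R_divides p (pmul a b) ->
        R_divides p a \/ R_divides p b].

End PS.

(* Main.v *)
Require Import Defs.
From mathcomp Require Import all_boot all_algebra.
From mathcomp Require Import zify.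
From Stdlib Require Import Classical FunctionalExtensionality.
Set Implicit Arguments. Unset Strict Implicit. Unset Printing Implicit Defensive.
Import GRing.Theory.
Local Open Scope ring_scope.

Section Alg.
Variable K : fieldType.
Implicit Types a b c f : pser K.

Definition Pn (N : nat) (a : pser K) : {poly K} := \poly_(i < N) a i.

Lemma pmulE N a b k : (k < N)%N -> pmul a b k = (Pn N a * Pn N b)`_k.
Proof.
move=> kN; rewrite coefM /pmul; apply: eq_bigr => i _; rewrite !coef_poly.
have hi := ltn_ord i.
rewrite (_ : (i < N)%N = true); last by apply/idP; lia.
by rewrite (_ : (k - i < N)%N = true) //; apply/idP; lia.
Qed.

Lemma coefM_eq (p p' q q' : {poly K}) j :
  (forall i, (i <= j)%N -> p`_i = p'`_i) ->
  (forall i, (i <= j)%N -> q`_i = q'`_i) -> (p*q)`_j = (p'*q')`_j.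
Proof.
move=> hp hq; rewrite !coefM; apply: eq_bigr => i _.
have hi : (i <= j)%N by rewrite -ltnS ltn_ord.
by rewrite hp // hq // leq_subr.
Qed.

Lemma pmulC a b : pmul a b = pmul b a.
Proof.
apply: functional_extensionality => k.
by rewrite (@pmulE k.+1 a b) // (@pmulE k.+1 b a) // mulrC.
Qed.

Lemma pmulA a b c : pmul a (pmul b c) = pmul (pmul a b) c.
Proof.
apply: functional_extensionality => k.
rewrite (@pmulE k.+1 a) // (@pmulE k.+1 _ c) //.
transitivity ((Pn k.+1 a * (Pn k.+1 b * Pn k.+1 c))`_k).
  apply: coefM_eq => // i ik; rewrite coef_poly ltnS ik /=.
  by apply: pmulE; rewrite ltnS.
rewrite mulrA; apply: coefM_eq => // i ik; rewrite coef_poly ltnS ik /=.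
by symmetry; apply: pmulE; rewrite ltnS.
Qed.

Definition Xm (m : nat) : pser K := fun i => if i == m then 1 else 0.

Lemma pmulXm m f j : pmul (Xm m) f j = if (m <= j)%N then f (j - m)%N else 0.
Proof.
rewrite /pmul; case: leqP => hm.
  have hm' : (m < j.+1)%N by rewrite ltnS.
  rewrite (bigD1 (Ordinal hm')) //= /Xm eqxx mul1r big1 ?addr0 // => i hi.
  case: eqP => [e|]; last by rewrite mul0r.
  by move: hi; rewrite -val_eqE /= e eqxx.
rewrite big1 // => i _; rewrite /Xm; case: eqP => e; last by rewrite mul0r.
have := ltn_ord i; lia.
Qed.

Lemma pmul1 a : pmul a (pone K) = a.
Proof.
rewrite pmulC; apply: functional_extensionality => j.
by rewrite (pmulXm 0 a j) subn0.
Qed.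

Lemma pmul_coef0 a b : pmul a b 0 = a 0 * b 0.
Proof. by rewrite /pmul big_ord1. Qed.

Lemma pmul_lowk a b k : (forall i, (i < k)%N -> a i = 0) -> pmul a b k = a k * b 0.
Proof.
move=> ha; rewrite /pmul big_ord_recr /= subnn big1 ?add0r // => i _.
by rewrite ha ?mul0r.
Qed.

Lemma low2 (m : nat) b c : (forall i, (i < m)%N -> b i = 0) ->
  (forall i, (i < m)%N -> c i = 0) -> forall j, (j < m + m)%N -> pmul b c j = 0.
Proof.
move=> hb hc j hj; rewrite /pmul big1 // => i _.
have hi := ltn_ord i.
case: (ltnP i m) => him; first by rewrite hb ?mul0r.
by rewrite hc ?mulr0 //; lia.
Qed.

Lemma nz_min p : p <> pzero K -> exists k, p k != 0 /\ forall i, (i < k)%N -> p i = 0.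
Proof.
move=> hp.
have ex : exists i, p i != 0.
  apply: NNPP => hn; apply: hp; apply: functional_extensionality => i.
  by apply/eqP; apply: negbNE; apply/negP => h; apply: hn; exists i.
case: (ex_minnP ex) => k pk kmin; exists k; split => // i ik.
by apply/eqP; apply: negbNE; apply/negP => h; have := kmin _ h; lia.
Qed.

Lemma pmul_cancel p c d : p <> pzero K -> pmul p c = pmul p d -> c = d.
Proof.
move=> /nz_min [k [pk pl]] e.
pose g := fun i => c i - d i.
have hg : forall j, pmul p g j = 0.
  move=> j; rewrite /pmul /g.
  under eq_bigr => i _ do rewrite mulrBr.
  by rewrite sumrB -/(pmul p c j) -/(pmul p d j) e subrr.
suff hm : forall m, g m = 0.
  by apply: functional_extensionality => m; apply/eqP; rewrite -subr_eq0 -/(g m) hm.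
elim/ltn_ind => m IH.
have := hg (k + m)%N; rewrite /pmul.
have hk : (k < (k + m).+1)%N by lia.
rewrite (bigD1 (Ordinal hk)) //= big1 ?addr0.
  by rewrite (_ : (k + m - k)%N = m) ?mulf_eq0; [move/eqP; rewrite mulf_eq0 (negbTE pk) /= => /eqP | lia].
move=> i hi; case: (ltnP i k) => hik; first by rewrite pl ?mul0r.
have hne : nat_of_ord i != k by move: hi; rewrite -val_eqE.
rewrite IH ?mulr0 //; have := ltn_ord i; move: hne hik; lia.
Qed.


Fixpoint pinvF (a : pser K) (k : nat) : pser K :=
  match k with
  | 0 => fun _ => (a 0%N)^-1
  | k'.+1 => let f := pinvF a k' in
     fun j => if (j <= k')%N then f j
              else - (a 0%N)^-1 * \sum_(i < k'.+1) a i.+1 * f (k' - i)%N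
  end.

Definition pinv a : pser K := fun j => pinvF a j j.

Lemma pinvF_stab a k j : (j <= k)%N -> pinvF a k j = pinv a j.
Proof.
elim: k j => [|k IH] j hj.
  by have -> : j = 0%N by lia.
rewrite /=; case: leqP => h; first exact: IH.
have -> : j = k.+1 by lia.
by rewrite /pinv /= ltnn.
Qed.

Lemma pinvS a k : pinv a k.+1 =
  - (a 0%N)^-1 * \sum_(i < k.+1) a i.+1 * pinv a (k - i)%N.
Proof.
rewrite {1}/pinv /= ltnn; congr (_ * _); apply: eq_bigr => i _.
by rewrite pinvF_stab // leq_subr.
Qed.

Lemma pinv0 a : pinv a 0 = (a 0%N)^-1.
Proof. by []. Qed.

Lemma pmul_pinv a : a 0%N != 0 -> pmul a (pinv a) = pone K.
Proof.
move=> a0; apply: functional_extensionality => k; case: k => [|k].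
  by rewrite pmul_coef0 pinv0 divff.
rewrite /pmul big_ord_recl /= subn0 pinvS mulrA mulrN divff // mulN1r.
rewrite /pone /=.
by rewrite addNr.
Qed.

End Alg.

Section RR.
Variables (K : fieldType) (K1 : {pred K}) (n : nat).
Hypothesis sf : is_subfield K1.
Hypothesis n0 : (0 < n)%N.
Implicit Types a b c p r u : pser K.

Lemma K10 : 0 \in K1.
Proof. by case: sf => h1 hs _ _; rewrite -(subrr 1); apply: hs. Qed.

Lemma unit_nz0 a : inR K1 n a -> a 0%N != 0 -> R_unit K1 n a.
Proof.
move=> [ha0 ha] a0; split; first by split.
exists (pinv a); split; last exact: pmul_pinv.
split; first by rewrite pinv0; case: sf => _ _ _ hi; apply: hi.
case=> [|i] hi; first by [].
rewrite pinvS big1 ?mulr0 // => j _; rewrite ha ?mul0r //.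
have := ltn_ord j; lia.
Qed.

Lemma nz0_nonunit a : a 0%N = 0 -> ~ R_unit K1 n a.
Proof.
move=> a0 [_ [v [_ e]]].
have := congr1 (fun f => f 0%N) e; rewrite /= pmul_coef0 a0 mul0r /pone /=.
by move/eqP; rewrite eq_sym oner_eq0.
Qed.

Lemma nonunit0 a : inR K1 n a -> ~ R_unit K1 n a -> a 0%N = 0.
Proof.
move=> ha hu; apply/eqP; apply: negbNE; apply/negP => h.
by apply: hu; apply: unit_nz0.
Qed.

Lemma low_n a : inR K1 n a -> a 0%N = 0 -> forall i, (i < n)%N -> a i = 0.
Proof. by move=> [_ ha] a0 [|i] hi //; apply: ha. Qed.

Lemma anyR p c : inR K1 n p -> p 0%N = 0 -> inR K1 n (pmul p c).
Proof.
move=> hp p0; split; first by rewrite pmul_coef0 p0 mul0r K10.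
move=> i /andP [_ hi]; rewrite /pmul big1 // => j _.
rewrite (low_n hp p0) ?mul0r //; have := ltn_ord j; lia.
Qed.

Lemma bad_u : ~ ((forall x, x \in K1) /\ n = 1%N) ->
  exists u, u 0%N != 0 /\ ~ inR K1 n u.
Proof.
move=> hn; case: (classic (forall x, x \in K1)) => hall.
  have n2 : (1 < n)%N by case: n n0 hn => [|[|m]] //= _ []; split.
  exists (fun i => if (i <= 1)%N then 1 else 0); split; first exact: oner_neq0.
  move=> [_ h]; have := h 1%N; rewrite /= n2 => /(_ isT) /eqP.
  by rewrite oner_eq0.
have [x hx] := not_all_ex_not _ _ hall.
exists (fun i => if i == 0%N then x else 0); split.
  by apply/negP => /eqP e; apply: hx; rewrite e K10.
by move=> [h _]; apply: hx.
Qed.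

Lemma no_prime : ~ ((forall x, x \in K1) /\ n = 1%N) -> forall p, ~ R_prime K1 n p.
Proof.
move=> /bad_u [u [u0 uR]] p [hp pnz pnu hpr].
have p0 := nonunit0 hp pnu.
have haR := anyR u hp p0.
have hd : R_divides K1 n p (pmul (pmul p u) (pmul p u)).
  exists (pmul p (pmul u u)); split; first exact: anyR.
  rewrite -!pmulA; congr pmul.
  by rewrite pmulA (pmulC u p) -pmulA.
have : R_divides K1 n p (pmul p u) by case: (hpr _ _ haR haR hd).
move=> [d [dR e]]; apply: uR.
by rewrite (pmul_cancel pnz e).
Qed.

Lemma irr_y r k w : inR K1 n r -> r 0%N = 0 -> r k != 0 ->
  (forall i, (i < k)%N -> r i = 0) -> (k < n + n)%N -> w 0%N != 0 ->
  R_irreducible K1 n (pmul r w).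
Proof.
move=> hr r0 rk rl k2 w0; split.
- exact: anyR.
- move=> e; have := congr1 (fun f => f k) e; rewrite /= pmul_lowk //.
  by move/eqP; rewrite mulf_eq0 (negbTE rk) (negbTE w0).
- by apply: nz0_nonunit; rewrite pmul_coef0 r0 mul0r.
move=> b c hb hc e.
case: (classic (R_unit K1 n b)) => ub; first by left.
case: (classic (R_unit K1 n c)) => uc; first by right.
exfalso.
have := low2 (low_n hb (nonunit0 hb ub)) (low_n hc (nonunit0 hc uc)) k2.
rewrite -e pmul_lowk // => /eqP; rewrite mulf_eq0 (negbTE rk) (negbTE w0).
by [].
Qed.

Lemma no_absirr : ~ ((forall x, x \in K1) /\ n = 1%N) -> forall r, ~ R_abs_irreducible K1 n r.
Proof.
move=> /bad_u [u [u0 uR]] r [[hr rnz rnu hirr] habs].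
have r0 := nonunit0 hr rnu.
have [k [rk rl]] := nz_min rnz.
have k2 : (k < n + n)%N.
  rewrite ltnNge; apply/negP => hk.
  pose s := fun i => r (i + n)%N.
  have hs : inR K1 n s.
    split; first by rewrite /s add0n rl ?K10 //; lia.
    move=> i /andP [_ hi]; rewrite /s rl //; lia.
  have hX : inR K1 n (Xm K n).
    split; first by rewrite /Xm (_ : (0 == n) = false) ?K10 //; lia.
    by move=> i /andP [_ hi]; rewrite /Xm (_ : (i == n) = false) //; lia.
  have e : r = pmul (Xm K n) s.
    apply: functional_extensionality => j; rewrite pmulXm.
    case: leqP => hj; first by rewrite /s subnK.
    by rewrite rl //; lia.
  case: (hirr _ _ hX hs e); apply: nz0_nonunit => //.
    by rewrite /Xm (_ : (0 == n) = false) //; lia.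
  by rewrite /s add0n rl //; lia.
have v0 : pinv u 0%N != 0 by rewrite pinv0 invr_eq0.
have hf : R_factorization K1 n [:: pmul r u; pmul r (pinv u)] (pprod (nseq 2 r)).
  split; first by split; [|split] => //; apply: (irr_y hr r0 rk rl k2).
  rewrite /pprod /= !pmul1 -pmulA (pmulC u) -pmulA.
  by rewrite (pmulC (pinv u)) pmul_pinv // !pmul1.
have := habs 2%N _ hf; rewrite /= => h.
inversion h as [|a s t1 b t2 hab hs e1 e2]; subst.
have eb : b = r.
  move: e2; clear hs; case: t1 => [|x [|y t]] /=; first by case.
    by case.
  by case=> _ _; case: t.
subst b; case: hab => w [[wR _] e].
apply: uR; rewrite (pmulC w) in e.
by rewrite (pmul_cancel rnz e).
Qed.

End RR.

Section Good.
Variables (K : fieldType) (K1 : {pred K}) (n : nat).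
Hypothesis sf : is_subfield K1.
Hypothesis hall : forall x : K, x \in K1.
Hypothesis n1 : n = 1%N.
Implicit Types a b c p r u w : pser K.

Let X := Xm K 1.

Lemma n0g : (0 < n)%N. Proof. by rewrite n1. Qed.

Lemma inR_all a : inR K1 n a.
Proof. by split => // i; rewrite n1; lia. Qed.

Lemma unit_all a : a 0%N != 0 -> R_unit K1 n a.
Proof. by move=> a0; apply: unit_nz0 => //; [rewrite n1 | apply: inR_all]. Qed.

Lemma X0 : X 0%N = 0. Proof. by []. Qed.

Lemma Xnz : X <> pzero K.
Proof. move=> e; have := congr1 (fun f => f 1%N) e; rewrite /X /Xm /= => /eqP; by rewrite oner_eq0. Qed.

Lemma shiftX a : a 0%N = 0 -> a = pmul X (fun i => a i.+1).
Proof.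
move=> a0; apply: functional_extensionality => j; rewrite pmulXm.
by case: j => [|j] //=; rewrite subn1.
Qed.

Lemma X_irr : R_irreducible K1 n X.
Proof.
split; [exact: inR_all | exact: Xnz | exact: nz0_nonunit |].
move=> b c _ _ e.
case: (classic (R_unit K1 n b)) => ub; first by left.
case: (classic (R_unit K1 n c)) => uc; first by right.
have b0 := nonunit0 sf n0g (inR_all b) ub.
have c0 := nonunit0 sf n0g (inR_all c) uc.
exfalso; have := congr1 (fun f => f 1%N) e.
rewrite /= /pmul big_ord_recl big_ord1 /= b0 c0 mul0r mulr0 addr0 /X /Xm /=.
by move/eqP; rewrite oner_eq0.
Qed.

Lemma pmul1l a : pmul (pone K) a = a.
Proof. by rewrite pmulC pmul1. Qed.

Lemma G s : forall m u, u 0%N != 0 -> all_Prop (R_irreducible K1 n) s ->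
  pprod s = pmul u (pprod (nseq m X)) -> ess_same K1 n s (nseq m X).
Proof.
elim: s => [|a s IH] m u u0 hs e.
  case: m e => [|m] e; first by constructor.
  exfalso; have := congr1 (fun f => f 0%N) e.
  rewrite /= !pmul_coef0 X0 mul0r mulr0 /pone /= => /eqP.
  by rewrite oner_eq0.
case: hs => [[ha anz anu hirr] hs].
have a0 := nonunit0 sf n0g ha anu.
set w := fun i => a i.+1.
have ea : a = pmul X w by apply: shiftX.
have w0 : w 0%N != 0.
  apply/negP => /eqP w0.
  by case: (hirr _ _ (inR_all X) (inR_all w) ea); apply: nz0_nonunit.
case: m e => [|m] e.
  exfalso; have := congr1 (fun f => f 0%N) e.
  rewrite /= pmul1 !pmul_coef0 a0 mul0r => /eqP.
  by rewrite eq_sym (negbTE u0).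
have e2 : pmul X (pmul w (pprod s)) = pmul X (pmul u (pprod (nseq m X))).
  move: e; rewrite /= ea -!pmulA => ->.
  by rewrite !pmulA (pmulC u).
have e3 := pmul_cancel (@Xnz) e2.
have e4 : pprod s = pmul (pmul (pinv w) u) (pprod (nseq m X)).
  rewrite -pmulA -e3 pmulA (pmulC _ w) pmul_pinv // pmul1l.
  by [].
have IH' := IH m _ _ hs e4.
apply: (@ess_cons _ _ _ a s [::] X (nseq m X)); last first.
  apply: IH' => //; rewrite pmul_coef0 pinv0 mulf_eq0 invr_eq0 negb_or w0 /=.
  exact: u0.
exists w; split; [exact: unit_all | by rewrite ea pmulC].
Qed.

Lemma X_absirr : R_abs_irreducible K1 n X.
Proof.
split; first exact: X_irr.
move=> m s [hs e]; apply: (G (u := pone K)) => //.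
  by rewrite /pone /= oner_neq0.
by rewrite pmul1l.
Qed.

Lemma X_prime : R_prime K1 n X.
Proof.
split; [exact: inR_all | exact: Xnz | exact: nz0_nonunit |].
move=> a b _ _ [c [_ e]].
have := congr1 (fun f => f 0%N) e; rewrite /= !pmul_coef0 X0 mul0r => /eqP.
rewrite mulf_eq0 => /orP [] /eqP h0.
  by left; exists (fun i => a i.+1); split; [apply: inR_all | apply: shiftX].
by right; exists (fun i => b i.+1); split; [apply: inR_all | apply: shiftX].
Qed.

End Good.

Local Close Scope ring_scope.

Theorem mainTheorem2 (K2 : fieldType) (K1 : {pred K2}) (n : nat) :
  is_subfield K1 -> (0 < n)%N ->
  ((exists r, R_abs_irreducible K1 n r) <->
     ((forall x : K2, x \in K1) /\ n = 1%N)) /\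
  ((exists p, R_prime K1 n p) <->
     ((forall x : K2, x \in K1) /\ n = 1%N)).
Proof.
move=> sf n0; split; split.
- move=> [r hr]; apply: NNPP => hn; exact: (no_absirr sf n0 hn hr).
- by move=> [hall n1]; exists (Xm K2 1); apply: X_absirr.
- move=> [p hp]; apply: NNPP => hn; exact: (no_prime sf n0 hn hp).
- by move=> [hall n1]; exists (Xm K2 1); apply: X_prime.
Qed.
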